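(* Let $k\geq 3$ be an odd integer and let $D$ be a directed graph whose degeneracy is $k$. Then $f(D)<\frac{k-1}{k+1}\,n(D)$.
   Context: Directed graphs are oriented graphs: finite, no loops, no multiple arcs and no pair of antiparallel arcs. $n(D)$ is the number of vertices and $f(D)$ is the minimum size of a set $F\subseteq V(D)$ such that $D-F$ contains no directed cycle. The degeneracy of $D$ is the degeneracy of its underlying undirected graph, i.e. the least $k$ such that there is an ordering of the vertices in which every vertex has at most $k$ neighbours preceding it. *)

(* Defs.v *)
From mathcomp Require Import all_boot.
Set Implicit Arguments. Unset Strict Implicit. Unset Printing Implicit Defensive.

(* A directed graph D on the finite vertex type T is given by its arc relation a. *)

(* Oriented graph: no loops, no pair of antiparallel arcs (multiple arcs are
   impossible since a is a relation). *)
Definition oriented (T : finType) (a : rel T) : Prop :=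
  (forall x, ~~ a x x) /\ (forall x y, ~~ (a x y && a y x)).

Definition adj (T : finType) (a : rel T) (x y : T) : bool := a x y || a y x.

Definition k_degenerate_ordering (T : finType) (a : rel T) (k : nat)
    (rank : T -> nat) : Prop :=
  injective rank /\
  forall x, #|[set y | adj a x y & rank y < rank x]| <= k.

Definition is_degeneracy (T : finType) (a : rel T) (k : nat) : Prop :=
  (exists rank, k_degenerate_ordering a k rank) /\
  (forall j rank, k_degenerate_ordering a j rank -> k <= j).

(* D - F contains a directed cycle: a nonempty closed walk following arcs,
   all of whose vertices lie outside F. *)
Definition has_dicycle_avoiding (T : finType) (a : rel T) (F : {set T}) : Prop :=
  exists s : seq T, [&& s != [::], all (fun v => v \notin F) s & cycle a s].

Definition is_fvs_number (T : finType) (a : rel T) (m : nat) : Prop :=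
  (exists F : {set T}, ~ has_dicycle_avoiding a F /\ #|F| = m) /\
  (forall F : {set T}, ~ has_dicycle_avoiding a F -> m <= #|F|).

(* Main.v *)
Require Import Defs.
From mathcomp Require Import all_boot.
From mathcomp Require Import zify.

Lemma arith (f h N a : nat) : 1 <= h -> f <= N - a -> N < h.+1 * a -> a <= N ->
  f * (2 * h.+1) < 2 * h * N.
Proof.
move=> Hh Hf cA HA.
have H1 : f * h.+1 <= (N - a) * h.+1 by apply: leq_mul.
rewrite mulnBl in H1.
have e1 : f * h.+1 = f + f * h by rewrite mulnS.
have e2 : N * h.+1 = N + N * h by rewrite mulnS.
have e3 : a * h.+1 = a + a * h by rewrite mulnS.
have e4 : h.+1 * a = a + a * h by rewrite mulnC mulnS.
have e5 : a * h <= N * h by rewrite leq_mul2r HA orbT.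
have H2 : f * h.+1 < N * h.
  rewrite e1 e2 e3 in H1; rewrite e4 in cA; lia.
rewrite mulnCA -mulnA [h * _]mulnC ltn_pmul2l //.
Qed.

Section Proof.
Variables (T : finType) (a : rel T).
Hypothesis Hor : oriented a.

Definition acyc (A : {set T}) := ~ has_dicycle_avoiding a (~: A).

Lemma acyc0 : acyc set0.
Proof.
move=> [s /and3P [Hs Hall _]]; case: s Hs Hall => // x s _ /=.
by rewrite setC0 in_setT.
Qed.

Lemma acyc_add (B : {set T}) x : acyc B ->
  (forall u, u \in B -> ~~ a u x) \/ (forall u, u \in B -> ~~ a x u) ->
  acyc (x |: B).
Proof.
move=> HB R [s /and3P [Hs Hall Hc]].
have Hall' : forall y, y \in s -> y \in x |: B.
  by move=> y ys; move/allP: Hall => /(_ y ys); rewrite in_setC negbK.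
case xs: (x \in s).
- case: R => R.
  + have H1 := prev_cycle Hc xs.
    have := Hall' (prev s x) ltac:(by rewrite mem_prev).
    rewrite in_setU1 => /orP [/eqP E|Hp].
    * by move: H1; rewrite E; case: Hor => L _; rewrite (negbTE (L x)).
    * by move: (R _ Hp); rewrite H1.
  + have H1 := next_cycle Hc xs.
    have := Hall' (next s x) ltac:(by rewrite mem_next).
    rewrite in_setU1 => /orP [/eqP E|Hp].
    * by move: H1; rewrite E; case: Hor => L _; rewrite (negbTE (L x)).
    * by move: (R _ Hp); rewrite H1.
- apply: HB; exists s; rewrite Hs Hc /= andbT.
  apply/allP => y ys; rewrite in_setC negbK.
  have := Hall' _ ys; rewrite in_setU1 => /orP [/eqP E|//].
  by move: ys; rewrite E xs.
Qed.

Lemma acyc1 x : acyc [set x].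
Proof.
rewrite -(setU0 [set x]); apply: acyc_add; first exact: acyc0.
by left=> u; rewrite in_set0.
Qed.

Lemma acyc2 x y : acyc [set x; y].
Proof.
apply: acyc_add; first exact: acyc1.
case Ha: (a y x).
- right=> u; rewrite in_set1 => /eqP ->.
  case: Hor => _ H; move: (H x y); rewrite Ha andbT; exact.
- by left=> u; rewrite in_set1 => /eqP ->; rewrite Ha.
Qed.

Variables (h : nat) (rank : T -> nat).
Hypothesis Hh : 1 <= h.
Hypothesis Hinj : injective rank.
Hypothesis Hdeg : forall x, #|[set y | adj a x y & rank y < rank x]| <= h.*2.+1.

Lemma key n (S : {set T}) : #|S| <= n -> S != set0 ->
  exists A : {set T}, [/\ A \subset S, acyc A & #|S| < h.+1 * #|A|].
Proof.
elim: n S => [|n IH] S HS HS0.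
  by move: HS0; rewrite -card_gt0; lia.
case/set0Pn: HS0 => x0 x0S.
case: (arg_maxnP rank x0S) => v vS vmax.
have {}vS : v \in S := vS.
set I := [set u in S | a u v]; set O := [set u in S | a v u].
have HIO : #|I| + #|O| <= h.*2.+1.
  have -> : #|I| + #|O| = #|I :|: O|.
    rewrite cardsU.
    suff -> : I :&: O = set0 by rewrite cards0 subn0.
    apply/setP => u; rewrite !inE.
    case: Hor => _ H; move: (H u v); case: (a u v); case: (a v u); by rewrite ?andbF.
  apply: leq_trans (Hdeg v); apply: subset_leq_card; apply/subsetP => u.
  rewrite !inE /adj => /orP [/andP [uS Ha] | /andP [uS Ha]].
  - rewrite Ha orbT /=; have Hle : rank u <= rank v := vmax u uS.
    rewrite ltn_neqAle Hle andbT; apply/eqP => E.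
    have E' := Hinj _ _ E; move: Ha; rewrite E'; case: Hor => L _; by rewrite (negbTE (L v)).
  - rewrite Ha /=; have Hle : rank u <= rank v := vmax u uS.
    rewrite ltn_neqAle Hle andbT; apply/eqP => E.
    have E' := Hinj _ _ E; move: Ha; rewrite E'; case: Hor => L _; by rewrite (negbTE (L v)).
have step : forall W : {set T}, W \subset S -> v \notin W -> #|W| <= h ->
   (forall u, u \in S -> u \notin W -> u != v -> ~~ a u v) \/
   (forall u, u \in S -> u \notin W -> u != v -> ~~ a v u) ->
   exists A : {set T}, [/\ A \subset S, acyc A & #|S| < h.+1 * #|A|].
  move=> W WS vW Wh R.
  set S' := S :\: (v |: W).
  have cS : #|S| = #|S'| + #|W|.+1.
    have EI : S :&: (v |: W) = v |: W.
      apply/setIidPr/subsetP => u; rewrite in_setU1 => /orP [/eqP ->//|].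
      by move/(subsetP WS).
    by rewrite -(cardsID (v |: W) S) EI addnC cardsU1 vW add1n.
  case: (boolP (S' == set0)) => [/eqP S0|S0].
  - move: cS; rewrite S0 cards0 add0n => cS.
    case: (boolP (W == set0)) => [/eqP W0|].
    + exists [set v]; split; first by rewrite sub1set.
      * exact: acyc1.
      * rewrite cards1 cS W0 cards0; lia.
    + case/set0Pn => w wW.
      exists [set v; w]; split.
      * by rewrite subUset !sub1set vS (subsetP WS).
      * exact: acyc2.
      * rewrite cards2; have -> : (v != w) by apply/eqP => E; move: vW; rewrite E wW.
        rewrite cS; lia.
  - have [|A' [A'S acA' cA']] := IH S' _ S0.
      by move: HS; rewrite cS; lia.
    have vA' : v \notin A'.
      apply/negP => /(subsetP A'S); by rewrite !inE eqxx.
    exists (v |: A'); split.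
    + rewrite subUset sub1set vS /=; apply: subset_trans A'S _; exact: subsetDl.
    + apply: acyc_add => //.
      case: R => R; [left|right] => u /(subsetP A'S);
        rewrite !inE negb_or => /andP [/andP [uv uW] uS]; exact: R.
    + rewrite cardsU1 vA' cS; lia.
have [Ih|Oh] : #|I| <= h \/ #|O| <= h by lia.
- apply: (step I) => //.
  + by apply/subsetP => u; rewrite inE => /andP [].
  + by rewrite inE; case: Hor => L _; rewrite (negbTE (L v)) andbF.
  + left=> u uS; rewrite inE uS /=; by move=> /negbTE -> .
- apply: (step O) => //.
  + by apply/subsetP => u; rewrite inE => /andP [].
  + by rewrite inE; case: Hor => L _; rewrite (negbTE (L v)) andbF.
  + right=> u uS; rewrite inE uS /=; by move=> /negbTE -> .
Qed.

End Proof.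

Theorem mainTheorem6 (T : finType) (a : rel T) (k f : nat) :
  oriented a -> 3 <= k -> odd k -> is_degeneracy a k -> is_fvs_number a f ->
  f * (k + 1) < (k - 1) * #|T|.
Proof.
move=> Hor Hk Hodd [[rank [Hinj Hdeg]] Hmin] [_ Hf].
have Ek := odd_double_half k; rewrite Hodd in Ek.
set h := k./2 in Ek.
have Hh : 1 <= h by move: Ek Hk; rewrite -mul2n; lia.
have HT : [set: T] != set0.
  apply/negP => /eqP E.
  have : k <= 0.
    apply: (Hmin 0 rank); split => // x.
    by move: (in_setT x); rewrite E in_set0.
  lia.
have Hdeg' : forall x, #|[set y | adj a x y & rank y < rank x]| <= h.*2.+1.
  by move=> x; rewrite -[h.*2.+1]add1n Ek.
have [A [_ acA cA]] := @key T a Hor h rank Hh Hinj Hdeg' _ _ (leqnn _) HT.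
have Hf' := Hf _ acA.
rewrite cardsT in cA.
have cC : #|~: A| = #|T| - #|A| by rewrite cardsCs setCK; move: (max_card (mem A)); lia.
rewrite cC in Hf'.
have E1 : k + 1 = 2 * h.+1 by move: Ek; rewrite -mul2n; lia.
have E2 : k - 1 = 2 * h by move: Ek; rewrite -mul2n; lia.
rewrite E1 E2.
have HA : #|A| <= #|T| by rewrite -cardsT subset_leq_card // subsetT.
exact: arith Hh Hf' cA HA.
Qed.
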